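(* For every $n\geq 1$, there exists a signed digraph $G$ on $[n]$ such that every nilpotent $G$-function $f:\{0,1,2\}^n\to\{0,1,2\}^n$ has class at least $\lfloor\log_2 n\rfloor+2$. Furthermore, if $n=2^{\lfloor\log_2 n\rfloor+1}-1$, then such a $G$ can be chosen strongly connected.
   Context: A signed digraph is a digraph (loops allowed, no multiple arcs) in which each arc is labeled positive, negative, or null (unsigned). For a finite interval of integers $A$, a function over $A$ is a map $f:A^n\to A^n$; $f^0=\mathrm{id}$, $f^k=f\circ f^{k-1}$. The interaction graph $G(f)$ is the signed digraph on $[n]$ with an arc $(j,i)$ iff $f_i(a)\neq f_i(b)$ for some $a,b\in A^n$ with $a_j<b_j$ and $a_\ell=b_\ell$ for $\ell\neq j$; the arc is positive if $f_i(a)\leq f_i(b)$ for all such pairs, negative if $f_i(a)\geq f_i(b)$ for all such pairs, and null otherwise. $f$ is a $G$-function if $G(f)=G$. $f$ is nilpotent if $f^k$ is constant for some $k\geq 0$; the least such $k$ is its class. *)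

(* Defs.v *)
From HB Require Import structures.
From mathcomp Require Import all_boot all_order.
Set Implicit Arguments. Unset Strict Implicit. Unset Printing Implicit Defensive.

Inductive sign := Pos | Neg | Null.
Definition sign_eqb (s t : sign) : bool :=
  match s, t with Pos, Pos | Neg, Neg | Null, Null => true | _, _ => false end.
Lemma sign_eqP : Equality.axiom sign_eqb.
Proof. by case; case; constructor. Qed.
HB.instance Definition _ := hasDecEq.Build sign sign_eqP.

(* A signed digraph on [n] (vertices 'I_n, loops allowed, no multiple arcs):
   G (j, i) = None if there is no arc (j,i), Some s if the arc (j,i) has sign s. *)
Definition sdigraph (n : nat) := {ffun 'I_n * 'I_n -> option sign}.

Definition A3 := 'I_3.
Definition config (n : nat) := {ffun 'I_n -> A3}.
Definition fun3 (n : nat) := config n -> config n.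

Definition jpair n (j : 'I_n) (a b : config n) : bool :=
  (a j < b j) && [forall l, (l != j) ==> (a l == b l)].

Definition interaction_graph n (f : fun3 n) : sdigraph n :=
  [ffun p : 'I_n * 'I_n =>
     let j := p.1 in let i := p.2 in
     if ~~ [exists a, exists b, jpair j a b && (f a i != f b i)] then None
     else if [forall a, forall b, jpair j a b ==> (f a i <= f b i)] then Some Pos
     else if [forall a, forall b, jpair j a b ==> (f b i <= f a i)] then Some Neg
     else Some Null].

Definition is_G_function n (G : sdigraph n) (f : fun3 n) := interaction_graph f = G.

Definition iter_const n (f : fun3 n) (k : nat) : bool :=
  [exists c : config n, [forall x : config n, iter k f x == c]].

Definition nilpotent n (f : fun3 n) : Prop := exists k, iter_const f k.

Definition nil_class n (f : fun3 n) (h : nilpotent f) : nat := ex_minn h.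

Definition arc_rel n (G : sdigraph n) : rel 'I_n := fun j i => G (j, i) != None.
Definition strongly_connected n (G : sdigraph n) : Prop :=
  forall i j : 'I_n, connect (arc_rel G) i j.

Definition class_lower_bound n (G : sdigraph n) : Prop :=
  forall f : fun3 n, is_G_function G f ->
  forall h : nilpotent f, trunc_log 2 n + 2 <= nil_class h.

(* Main.v *)
Require Import Defs.
From mathcomp Require Import all_boot all_order.
From mathcomp Require Import zify.
Set Implicit Arguments. Unset Strict Implicit. Unset Printing Implicit Defensive.

Definition tf (a0 a1 a2 : 'I_3) (x : 'I_3) : 'I_3 :=
  if val x == 0 then a0 else if val x == 1 then a1 else a2.
Definition O3 : seq 'I_3 := [:: @Ordinal 3 0 isT; @Ordinal 3 1 isT; @Ordinal 3 2 isT].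
Notation AL P := (all P O3).
Notation EX P := (has P O3).
Definition incb (h : 'I_3 -> 'I_3) := AL (fun a : 'I_3 => AL (fun b : 'I_3 => (a < b) ==> (h a <= h b))).
Definition decb (h : 'I_3 -> 'I_3) := AL (fun a : 'I_3 => AL (fun b : 'I_3 => (a < b) ==> (h b <= h a))).
Definition ncb3 (h : 'I_3 -> 'I_3) := EX (fun a : 'I_3 => EX (fun b : 'I_3 => h a != h b)).
Lemma key1b : AL (fun a0 : 'I_3 => AL (fun a1 : 'I_3 => AL (fun a2 : 'I_3 => AL (fun b0 : 'I_3 => AL (fun b1 : 'I_3 => AL (fun b2 : 'I_3 =>
  AL (fun u : 'I_3 => AL (fun w : 'I_3 =>
  let h1 := tf a0 a1 a2 in let h2 := tf b0 b1 b2 in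
  ((u != w) && (h1 u == h1 w) && (h2 u == h2 w) && incb h1 && ncb3 h1) ==> (incb h2 || decb h2))))))))).
Proof. vm_compute. reflexivity. Qed.
Lemma key2b : AL (fun a0 : 'I_3 => AL (fun a1 : 'I_3 => AL (fun a2 : 'I_3 => AL (fun b0 : 'I_3 => AL (fun b1 : 'I_3 => AL (fun b2 : 'I_3 =>
  let g := tf a0 a1 a2 in let h := tf b0 b1 b2 in
  (~~ incb g && ~~ decb g && incb h && ncb3 h && AL (fun a : 'I_3 => AL (fun b : 'I_3 => h (g a) == h (g b)))) ==>
  EX (fun u : 'I_3 => EX (fun v : 'I_3 => (u != v) && (g (g u) == u) && (g (g v) == v))))))))).
Proof. vm_compute. reflexivity. Qed.

Lemma memO3 (x : 'I_3) : x \in O3.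
Proof. by case: x => [[|[|[|k]]] Hk]. Qed.

Lemma ALP (P : 'I_3 -> bool) : AL P -> forall x, P x.
Proof. by move/allP => H x; apply: H; apply: memO3. Qed.
Lemma ALI (P : 'I_3 -> bool) : (forall x, P x) -> AL P.
Proof. by move=> H; apply/allP => x _. Qed.
Lemma EXP (P : 'I_3 -> bool) : EX P -> exists x, P x.
Proof. by case/hasP => x _ Hx; exists x. Qed.
Lemma EXI (P : 'I_3 -> bool) x : P x -> EX P.
Proof. by move=> Hx; apply/hasP; exists x => //; apply: memO3. Qed.

Definition o0 : 'I_3 := @Ordinal 3 0 isT.
Definition o1 : 'I_3 := @Ordinal 3 1 isT.
Definition o2 : 'I_3 := @Ordinal 3 2 isT.

Lemma tfE (h : 'I_3 -> 'I_3) : tf (h o0) (h o1) (h o2) =1 h.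
Proof.
case=> [[|[|[|k]]] Hk] //=; rewrite /tf /=; congr h; exact: val_inj.
Qed.

Definition mono3 (h : 'I_3 -> 'I_3) := forall a b : 'I_3, a < b -> h a <= h b.
Definition anti3 (h : 'I_3 -> 'I_3) := forall a b : 'I_3, a < b -> h b <= h a.

Lemma incbP h : incb h <-> mono3 h.
Proof.
split=> [H a b Hab | H].
  by move: (ALP H a) => /ALP /(_ b) /implyP; apply.
by apply: ALI => a; apply: ALI => b; apply/implyP; apply: H.
Qed.
Lemma decbP h : decb h <-> anti3 h.
Proof.
split=> [H a b Hab | H].
  by move: (ALP H a) => /ALP /(_ b) /implyP; apply.
by apply: ALI => a; apply: ALI => b; apply/implyP; apply: H.
Qed.

Lemma eq_incb h h' : h =1 h' -> incb h = incb h'.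
Proof. by move=> E; rewrite /incb; apply: eq_all => a; apply: eq_all => b; rewrite !E. Qed.
Lemma eq_decb h h' : h =1 h' -> decb h = decb h'.
Proof. by move=> E; rewrite /decb; apply: eq_all => a; apply: eq_all => b; rewrite !E. Qed.

Lemma key1 (h1 h2 : 'I_3 -> 'I_3) (u w : 'I_3) :
  u != w -> h1 u = h1 w -> h2 u = h2 w -> mono3 h1 -> (exists a b, h1 a != h1 b) ->
  mono3 h2 \/ anti3 h2.
Proof.
move=> Huw E1 E2 M1 [a [b Hab]].
have := ALP key1b (h1 o0) => /ALP /(_ (h1 o1)) /ALP /(_ (h1 o2)) /ALP /(_ (h2 o0))
  /ALP /(_ (h2 o1)) /ALP /(_ (h2 o2)) /ALP /(_ u) /ALP /(_ w) /=.
rewrite !tfE (eq_incb (tfE h1)) (eq_incb (tfE h2)) (eq_decb (tfE h2)) Huw E1 E2 !eqxx /=.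
have -> : incb h1 by apply/incbP.
have -> : ncb3 (tf (h1 o0) (h1 o1) (h1 o2)) by apply/hasP; exists a; rewrite ?memO3 //; apply/hasP; exists b; rewrite ?memO3 // !tfE.
by case/orP => [/incbP|/decbP]; [left|right].
Qed.

Lemma key2 (g h : 'I_3 -> 'I_3) :
  ~ mono3 g -> ~ anti3 g -> mono3 h -> (exists a b, h a != h b) ->
  (forall a b, h (g a) = h (g b)) ->
  exists u v, u != v /\ g (g u) = u /\ g (g v) = v.
Proof.
move=> Ng Ag Mh [a [b Hab]] Hc.
have := ALP key2b (g o0) => /ALP /(_ (g o1)) /ALP /(_ (g o2)) /ALP /(_ (h o0))
  /ALP /(_ (h o1)) /ALP /(_ (h o2)).
cbv zeta.
rewrite (eq_incb (tfE g)) (eq_decb (tfE g)) (eq_incb (tfE h)).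
have -> : ~~ incb g by apply/negP => /incbP.
have -> : ~~ decb g by apply/negP => /decbP.
have -> : incb h by apply/incbP.
have -> : ncb3 (tf (h o0) (h o1) (h o2)) by apply/hasP; exists a; rewrite ?memO3 //; apply/hasP; exists b; rewrite ?memO3 // !tfE.
have -> : AL (fun a : 'I_3 => AL (fun b : 'I_3 => tf (h o0) (h o1) (h o2) (tf (g o0) (g o1) (g o2) a) ==
                         tf (h o0) (h o1) (h o2) (tf (g o0) (g o1) (g o2) b))).
  by apply: ALI => x; apply: ALI => y; rewrite !tfE (Hc x y).
move=> /implyP /(_ isT) /EXP [u /EXP [v /andP [/andP [Huv /eqP Eu] /eqP Ev]]].
by exists u, v; rewrite !tfE in Eu Ev.
Qed.

Section Dyn.
Variable n : nat.
Variable f : fun3 n.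

Definition cst (v : A3) : config n := [ffun _ => v].
Definition upd (c : 'I_n) (v : A3) : config n := [ffun l => if l == c then v else ord0].

Section IG.
Variables (j i : 'I_n).
Notation E := [exists a, exists b, jpair j a b && (f a i != f b i)].
Notation AA := [forall a, forall b, jpair j a b ==> (f a i <= f b i)].
Notation BB := [forall a, forall b, jpair j a b ==> (f b i <= f a i)].
Lemma ig_none : interaction_graph f (j, i) = None -> ~~ E.
Proof. by rewrite /interaction_graph ffunE /=; case: ifP => // _; case: ifP => // _; case: ifP. Qed.
Lemma ig_some : interaction_graph f (j, i) != None -> E.
Proof. by rewrite /interaction_graph ffunE /=; case: ifP => // /negbT /negPn. Qed.
Lemma ig_pos : interaction_graph f (j, i) = Some Pos -> AA.
Proof. by rewrite /interaction_graph ffunE /=; case: ifP => // _; case: ifP => // _; case: ifP. Qed.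
Lemma ig_null : interaction_graph f (j, i) = Some Null -> ~~ AA /\ ~~ BB.
Proof.
rewrite /interaction_graph ffunE /=; case: ifP => // _; case: ifP => // /negbT H1.
by case: ifP => // /negbT H2.
Qed.
End IG.

Lemma noarc_eq (j i : 'I_n) : interaction_graph f (j, i) = None ->
  forall a b : config n, (forall l, l != j -> a l = b l) -> f a i = f b i.
Proof.
move=> /ig_none Hex a b Hab.
have Hjp : forall a b : config n, (forall l, l != j -> a l = b l) -> a j < b j -> f a i = f b i.
  move=> a' b' Hab' Hlt; apply/eqP; apply: contraNT Hex => Hne.
  apply/existsP; exists a'; apply/existsP; exists b'; rewrite Hne andbT /jpair Hlt /=.
  by apply/forallP => l; apply/implyP => /Hab' ->.
case: (ltngtP (a j) (b j)) => H.
- exact: Hjp.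
- by symmetry; apply: Hjp => // l /Hab ->.
- have -> : a = b by apply/ffunP => l; case: (eqVneq l j) => [->|/Hab //]; exact: val_inj.
  by [].
Qed.

Lemma only_dep (c i : 'I_n) : (forall j, j != c -> interaction_graph f (j, i) = None) ->
  forall x y : config n, x c = y c -> f x i = f y i.
Proof.
move=> Hno x y Hxy.
pose z k : config n := [ffun l : 'I_n => if (val l < k)%N then y l else x l].
have Hz : forall k, f x i = f (z k) i.
  elim=> [|k IH].
    by congr (f _ i); apply/ffunP => l; rewrite ffunE.
  rewrite IH; case: (ltnP k n) => Hk.
    pose l0 : 'I_n := Ordinal Hk.
    case: (eqVneq l0 c) => Hl0.
      congr (f _ i); apply/ffunP => l; rewrite !ffunE.
      case: (ltngtP (val l) k) => Hlk.
      - by rewrite ltnS (ltnW Hlk).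
      - by rewrite ltnS leqNgt Hlk.
      - have El : l = c by rewrite -Hl0; apply: val_inj.
        by rewrite Hlk ltnSn El Hxy.
    apply: (noarc_eq (Hno _ Hl0)) => l Hl; rewrite !ffunE.
    have Hlk : val l != k by apply: contra Hl => /eqP E; apply/eqP/val_inj.
    by rewrite ltnS (leq_eqVlt (val l) k) (negbTE Hlk).
  congr (f _ i); apply/ffunP => l; rewrite !ffunE.
  have Hl := ltn_ord l.
  by rewrite (leq_trans Hl Hk) (leq_trans Hl (leq_trans Hk (leqnSn _))).
rewrite (Hz n); congr (f _ i); apply/ffunP => l; rewrite ffunE.
by rewrite ltn_ord.
Qed.

Definition unary (i : 'I_n) (v : A3) : A3 := f (cst v) i.

Lemma unaryE (c i : 'I_n) : (forall j, j != c -> interaction_graph f (j, i) = None) ->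
  forall x, f x i = unary i (x c).
Proof. by move=> H x; apply: (only_dep H); rewrite ffunE. Qed.

Lemma arc_nonconst (j i : 'I_n) : interaction_graph f (j, i) != None ->
  exists a b, f a i != f b i.
Proof.
by move=> /ig_some /existsP [a /existsP [b /andP [_ H]]]; exists a, b.
Qed.

Lemma jpair_upd (c : 'I_n) (u w : A3) : u < w -> jpair c (upd c u) (upd c w).
Proof.
move=> Huw; rewrite /jpair !ffunE eqxx Huw /=.
by apply/forallP => l; apply/implyP => Hl; rewrite !ffunE (negbTE Hl).
Qed.

Lemma pos_unary (c i : 'I_n) : (forall j, j != c -> interaction_graph f (j, i) = None) ->
  interaction_graph f (c, i) = Some Pos ->
  mono3 (unary i) /\ exists a b, unary i a != unary i b.
Proof.
move=> Hno E.
have U := unaryE Hno.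
have Hne : interaction_graph f (c, i) != None by rewrite E.
have /forallP Hall := ig_pos E; split.
  move=> u w Huw.
  have := Hall (upd c u) => /forallP /(_ (upd c w)) /implyP /(_ (jpair_upd c Huw)).
  by rewrite !U !ffunE eqxx.
have [a [b H]] := arc_nonconst Hne.
by exists (a c), (b c); rewrite -!U.
Qed.

Lemma null_unary (c i : 'I_n) : (forall j, j != c -> interaction_graph f (j, i) = None) ->
  interaction_graph f (c, i) = Some Null ->
  ~ mono3 (unary i) /\ ~ anti3 (unary i).
Proof.
move=> Hno E.
have U := unaryE Hno.
have [H1 H2] := ig_null E; split.
  move=> M; apply/negP: H1; apply/negPn/forallP => a; apply/forallP => b.
  by apply/implyP => /andP [Hlt _]; rewrite !U; apply: M.
move=> M; apply/negP: H2; apply/negPn/forallP => a; apply/forallP => b.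
by apply/implyP => /andP [Hlt _]; rewrite !U; apply: M.
Qed.

Definition ncb (t : nat) (i : 'I_n) : bool :=
  [exists x, exists y, iter t f x i != iter t f y i].

Definition child_pos (c i : 'I_n) :=
  (forall j, j != c -> interaction_graph f (j, i) = None) /\ interaction_graph f (c, i) = Some Pos.
Definition child_null (c i : 'I_n) :=
  (forall j, j != c -> interaction_graph f (j, i) = None) /\ interaction_graph f (c, i) = Some Null.

Lemma child_iter (c i : 'I_n) t x : (forall j, j != c -> interaction_graph f (j, i) = None) ->
  iter t.+1 f x i = unary i (iter t f x c).
Proof. by move=> H; rewrite iterS (unaryE H). Qed.

Lemma child_step (c i1 i2 : 'I_n) t : child_pos c i1 -> child_null c i2 ->
  ncb t c -> ncb t.+1 i1 || ncb t.+1 i2.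
Proof.
move=> [H1 E1] [H2 E2] /existsP [x /existsP [y Hxy]].
apply/negPn/negP; rewrite negb_or => /andP [N1 N2].
have C1 : forall x y, iter t.+1 f x i1 = iter t.+1 f y i1.
  by move=> x' y'; apply/eqP/negPn/negP => Hn; apply/negP: N1; apply/negPn/existsP; exists x'; apply/existsP; exists y'.
have C2 : forall x y, iter t.+1 f x i2 = iter t.+1 f y i2.
  by move=> x' y'; apply/eqP/negPn/negP => Hn; apply/negP: N2; apply/negPn/existsP; exists x'; apply/existsP; exists y'.
have [M1 NC1] := pos_unary H1 E1.
have [Nm Na] := null_unary H2 E2.
have e1 := C1 x y; rewrite !(child_iter _ _ H1) in e1.
have e2 := C2 x y; rewrite !(child_iter _ _ H2) in e2.
by case: (key1 Hxy e1 e2 M1 NC1).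
Qed.

Lemma const_later k t : iter_const f k -> k <= t -> iter_const f t.
Proof.
case/existsP => c /forallP Hc Hkt; apply/existsP; exists (iter (t - k) f c).
apply/forallP => x.
have -> : iter t f x = iter (t - k) f (iter k f x) by rewrite -iterD subnK.
by rewrite (eqP (Hc x)).
Qed.

Lemma ncb_not_const t i k : ncb t i -> k <= t -> ~~ iter_const f k.
Proof.
move=> /existsP [x /existsP [y Hxy]] Hkt; apply/negP => /const_later /(_ Hkt).
case/existsP => c /forallP Hc.
by move: Hxy; rewrite (eqP (Hc x)) (eqP (Hc y)) eqxx.
Qed.

Lemma class_ge (h : nilpotent f) t i : ncb t i -> t.+1 <= nil_class h.
Proof.
move=> Hnc; rewrite /nil_class; case: ex_minnP => k Hk _.
rewrite ltnNge; apply/negP => Hkt.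
by move: (ncb_not_const Hnc Hkt); rewrite Hk.
Qed.

Lemma ncb1 (j i : 'I_n) : interaction_graph f (j, i) != None -> ncb 1 i.
Proof.
by move=> /arc_nonconst [a [b H]]; apply/existsP; exists a; apply/existsP; exists b.
Qed.

End Dyn.

Section Tree.
Variable n : nat.
Variable f : fun3 n.

Lemma tree_nc t D
  (HT : forall i : 'I_n, i < 2 ^ D - 1 -> exists i1 i2 : 'I_n,
     val i1 = 2 * i + 1 /\ val i2 = 2 * i + 2 /\ child_pos f i i1 /\ child_null f i i2)
  (r : 'I_n) : val r = 0 -> ncb f t r -> exists i : 'I_n, ncb f (t + D) i.
Proof.
move=> Hr Hnc.
suff H : forall d, d <= D -> exists i : 'I_n, i < 2 ^ d.+1 - 1 /\ ncb f (t + d) i.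
  by have [i [_ Hi]] := H D (leqnn D); exists i.
elim=> [_|d IH Hd].
  by exists r; rewrite Hr addn0 expn1.
have [i [Hi Hnci]] := IH (ltnW Hd).
have Hp : 2 ^ d.+1 <= 2 ^ D by rewrite leq_exp2l.
have HiD : i < 2 ^ D - 1 by lia.
have [i1 [i2 [E1 [E2 [C1 C2]]]]] := HT i HiD.
have E : 2 ^ d.+2 = 2 * 2 ^ d.+1 by rewrite expnS.
case/orP: (child_step C1 C2 Hnci) => Hc.
  by exists i1; split; [rewrite E1; lia | rewrite addnS].
by exists i2; split; [rewrite E2; lia | rewrite addnS].
Qed.

Lemma periodic (g : A3 -> A3) (u v : A3) : u != v -> g (g u) = u -> g (g v) = v ->
  forall k, iter k g u != iter k g v.
Proof.
move=> Huv Hu Hv.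
suff H : forall k, (iter k g u != iter k g v) && (iter k.+1 g u != iter k.+1 g v).
  by move=> k; case/andP: (H k).
elim=> [|k /andP [H1 H2]].
  rewrite /= Huv /=; apply/eqP => E; move/eqP: Huv; apply.
  by rewrite -Hu -Hv E.
rewrite H2 /=.
by rewrite -!iterS !iterSr Hu Hv.
Qed.

Lemma gadget (s r : 'I_n) : nilpotent f -> child_null f s s -> child_pos f s r -> ncb f 2 r.
Proof.
move=> [k Hk] [Ns Es] [Nr Er].
have [Ng Ag] := null_unary Ns Es.
have [Mh NCh] := pos_unary Nr Er.
set g := unary f s; set h := unary f r.
have Is : forall t x, iter t f x s = iter t g (x s).
  elim=> [//|t IH] x; by rewrite (child_iter _ _ Ns) IH.
case: (boolP (ncb f 2 r)) => // Hn.
have C : forall a b, h (g a) = h (g b).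
  move=> a b.
  have : iter 2 f (cst n a) r = iter 2 f (cst n b) r.
    apply/eqP/negPn/negP => Hne; move/negP: Hn; apply; apply/existsP; exists (cst n a); apply/existsP; exists (cst n b).
    exact: Hne.
  by rewrite !(child_iter _ _ Nr) !Is /= !ffunE.
have [u [v [Huv [Hu Hv]]]] := key2 Ng Ag Mh NCh C.
have := periodic Huv Hu Hv k.
case/existsP: Hk => c /forallP Hc.
have := Hc (cst n u); have := Hc (cst n v).
move=> /eqP Ev /eqP Eu.
have := Is k (cst n u); have := Is k (cst n v); rewrite !ffunE.
by move=> <- <-; rewrite Eu Ev eqxx.
Qed.

End Tree.

Definition Gsc (n : nat) : sdigraph n :=
  [ffun p : 'I_n * 'I_n => let j := val p.1 in let i := val p.2 in
    if i == 2 * j + 1 then Some Pos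
    else if i == 2 * j + 2 then Some Null
    else if (i == 0) && (n <= 2 * j + 1) then Some Pos else None].

Lemma Gsc_child1 n (i i1 : 'I_n) : val i1 = 2 * i + 1 ->
  (forall j : 'I_n, j != i -> Gsc n (j, i1) = None) /\ Gsc n (i, i1) = Some Pos.
Proof.
move=> E1; split; last by rewrite ffunE /= E1 eqxx.
move=> j Hj; have Hj' : (j : nat) != i by [].

rewrite ffunE /= E1.
case: eqP => [?|_]; first lia.
case: eqP => [?|_]; first lia.
by case: eqP => [?|_] //; lia.
Qed.

Lemma Gsc_child2 n (i i2 : 'I_n) : val i2 = 2 * i + 2 ->
  (forall j : 'I_n, j != i -> Gsc n (j, i2) = None) /\ Gsc n (i, i2) = Some Null.
Proof.
move=> E2; split.
  move=> j Hj; have Hj' : (j : nat) != i by [].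

  rewrite ffunE /= E2.
  case: eqP => [?|_]; first lia.
  case: eqP => [?|_]; first lia.
  by case: eqP => [?|_] //; lia.
rewrite ffunE /= E2.
case: eqP => [?|_]; first lia.
by rewrite eqxx.
Qed.

Lemma Gsc_sc n : strongly_connected (Gsc n).
Proof.
have Hn : forall i : 'I_n, 0 < n by case=> i Hi; lia.
have Down : forall (r : 'I_n), val r = 0 -> forall k (Hk : k < n), connect (arc_rel (Gsc n)) r (Ordinal Hk).
  move=> r Hr k; elim/ltn_ind: k => k IH Hk.
  case: k IH Hk => [|k] IH Hk.
    by have -> : Ordinal Hk = r by apply: val_inj; rewrite /= Hr.
  have Ek := odd_double_half k; rewrite -muln2 in Ek.
  have Ek' : k = odd k + k./2 * 2 by rewrite Ek.
  have Hp : k./2 < k.+1 by case: (odd k) in Ek'; lia.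
  have Hpn : k./2 < n by lia.
  apply: connect_trans (IH _ Hp Hpn) _; apply: connect1.
  rewrite /arc_rel ffunE /=.
  case: (odd k) in Ek'.
    have -> : (k.+1 == 2 * k./2 + 1) = false by apply/eqP; lia.
    have -> : (k.+1 == 2 * k./2 + 2) = true by apply/eqP; lia.
    by [].
  have -> : (k.+1 == 2 * k./2 + 1) = true by apply/eqP; lia.
  by [].
have Up : forall (r : 'I_n), val r = 0 -> forall d k (Hk : k < n), n - k = d -> connect (arc_rel (Gsc n)) (Ordinal Hk) r.
  move=> r Hr; elim/ltn_ind => d IH k Hk Hd.
  case: (leqP n (2 * k + 1)) => Hleaf.
    apply: connect1; rewrite /arc_rel ffunE /= Hr.
    have -> : (0 == 2 * k + 1) = false by apply/eqP; lia.
    have -> : (0 == 2 * k + 2) = false by apply/eqP; lia.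
    by rewrite eqxx Hleaf.
  apply: (connect_trans (y := Ordinal Hleaf)); last first.
    by apply: (IH (n - (2 * k + 1))) => //; lia.
  by apply: connect1; rewrite /arc_rel ffunE /= eqxx.
move=> i j.
have r0 : 0 < n := Hn i.
pose r : 'I_n := Ordinal r0.
apply: (connect_trans (y := r)).
  have -> : i = Ordinal (ltn_ord i) by apply: val_inj.
  exact: (Up r erefl _ _ _ erefl).
have -> : j = Ordinal (ltn_ord j) by apply: val_inj.
exact: Down.
Qed.

Definition G1 (n : nat) : sdigraph n :=
  let T := 2 ^ trunc_log 2 n - 1 in
  [ffun p : 'I_n * 'I_n => let j := val p.1 in let i := val p.2 in
    if (i < T) && (i == 2 * j + 1) then Some Pos
    else if (i < T) && (i == 2 * j + 2) then Some Null
    else if (j == T) && (i == T) then Some Null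
    else if (j == T) && (i == 0) then Some Pos else None].

Section G1facts.
Variable n : nat.
Let T := 2 ^ trunc_log 2 n - 1.

Lemma G1_s (s : 'I_n) : (s : nat) = T ->
  (forall j : 'I_n, j != s -> G1 n (j, s) = None) /\ G1 n (s, s) = Some Null.
Proof.
move=> Es; split; last by rewrite ffunE /= -/T Es ltnn eqxx.
move=> j Hj; have Hj' : (j : nat) != s by [].
rewrite ffunE /= -/T Es ltnn /=.
case: eqP => [?|_]; first lia.
by [].
Qed.

Lemma G1_r (s r : 'I_n) : (s : nat) = T -> (r : nat) = 0 -> 0 < T ->
  (forall j : 'I_n, j != s -> G1 n (j, r) = None) /\ G1 n (s, r) = Some Pos.
Proof.
move=> Es Er HT; split.
  move=> j Hj; have Hj' : (j : nat) != s by [].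
  rewrite ffunE /= -/T Er.
  case: eqP => [?|_]; first (rewrite andbT; lia).
  rewrite andbF; case: eqP => [?|_]; first (rewrite andbT; lia).
  rewrite andbF; case: eqP => [?|_]; first lia.
  by [].
rewrite ffunE /= -/T Er Es eqxx /=.
have -> : (0 == 2 * T + 1) = false by apply/eqP; lia.
have -> : (0 == 2 * T + 2) = false by apply/eqP; lia.
have -> : (0 == T) = false by apply/eqP; lia.
by rewrite !andbF.
Qed.

Lemma G1_child1 (i i1 : 'I_n) : (i1 : nat) = 2 * i + 1 -> (i1 : nat) < T ->
  (forall j : 'I_n, j != i -> G1 n (j, i1) = None) /\ G1 n (i, i1) = Some Pos.
Proof.
move=> E1 H1; split; last by rewrite ffunE /= -/T -E1 H1 E1 eqxx.
move=> j Hj; have Hj' : (j : nat) != i by [].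
rewrite ffunE /= -/T E1.
case: eqP => [?|_]; first lia.
case: eqP => [?|_]; first lia.
rewrite !andbF.
have -> : (2 * i + 1 == T) = false by apply/eqP; lia.
have -> : (2 * i + 1 == 0) = false by apply/eqP; lia.
by rewrite !andbF.
Qed.

Lemma G1_child2 (i i2 : 'I_n) : (i2 : nat) = 2 * i + 2 -> (i2 : nat) < T ->
  (forall j : 'I_n, j != i -> G1 n (j, i2) = None) /\ G1 n (i, i2) = Some Null.
Proof.
move=> E2 H2; split.
  move=> j Hj; have Hj' : (j : nat) != i by [].
  rewrite ffunE /= -/T E2.
  case: eqP => [?|_]; first lia.
  case: eqP => [?|_]; first lia.
  rewrite !andbF.
  have -> : (2 * i + 2 == T) = false by apply/eqP; lia.
  have -> : (2 * i + 2 == 0) = false by apply/eqP; lia.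
  by rewrite !andbF.
rewrite ffunE /= -/T -E2 H2 E2.
case: eqP => [?|_]; first lia.
by rewrite eqxx.
Qed.
End G1facts.

Unset Implicit Arguments.

Theorem proposition5 (n : nat) : 1 <= n ->
  (exists G : sdigraph n, class_lower_bound G) /\
  (n = 2 ^ (trunc_log 2 n).+1 - 1 ->
     exists G : sdigraph n, class_lower_bound G /\ strongly_connected G).
Proof.
move=> Hn.
set m := trunc_log 2 n.
have Hpm : 2 ^ m <= n by apply: trunc_logP.
have Hp1 : 0 < 2 ^ m by rewrite expn_gt0.
split.
  exists (G1 n) => f Hf hnil.
  have Hs : 2 ^ m - 1 < n by lia.
  pose s : 'I_n := Ordinal Hs.
  have [Ns Es] := G1_s (erefl (val s)).
  case: (posnP m) => Hm.
    have Hnc : ncb f 1 s.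
      by apply: (ncb1 (j := s)); rewrite Hf Es.
    by have := class_ge hnil Hnc; rewrite -/m Hm.
  have HT : 0 < 2 ^ trunc_log 2 n - 1.
    have : 2 ^ 1 <= 2 ^ m by rewrite leq_exp2l.
    rewrite -/m; lia.
  pose r : 'I_n := Ordinal Hn.
  have [Nr Er] := G1_r (erefl (val s)) (erefl (val r)) HT.
  have Hr2 : ncb f 2 r.
    apply: (gadget (s := s)) => //; rewrite /child_null /child_pos Hf; by split.
  have Htree := @tree_nc n f 2 m.-1.
  have [i Hi] : exists i : 'I_n, ncb f (2 + m.-1) i.
    apply: (Htree _ r) => // i Hi.
    have Hpd : 2 ^ m = 2 * 2 ^ m.-1 by rewrite -expnS prednK.
    have H1 : 2 * i + 1 < n by lia.
    have H2 : 2 * i + 2 < n by lia.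
    exists (Ordinal H1), (Ordinal H2); do 2 (split; first by []).
    have [C1 D1] := @G1_child1 n i (Ordinal H1) erefl ltac:(rewrite /= -/m; lia).
    have [C2 D2] := @G1_child2 n i (Ordinal H2) erefl ltac:(rewrite /= -/m; lia).
    by rewrite /child_null /child_pos Hf.
  have := class_ge hnil Hi.
  rewrite -/m; lia.
move=> Hnm.
exists (Gsc n); split; last exact: Gsc_sc.
move=> f Hf hnil.
have Hn1 : n.-1 < n by lia.
pose r : 'I_n := Ordinal Hn.
have Hr : ncb f 1 r.
  apply: (ncb1 (j := Ordinal Hn1)); rewrite Hf ffunE /=.
  have -> : (0 == 2 * n.-1 + 1) = false by apply/eqP; lia.
  have -> : (0 == 2 * n.-1 + 2) = false by apply/eqP; lia.
  have -> : (n <= 2 * n.-1 + 1) = true by apply/idP; lia.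
  by [].
have [i Hi] : exists i : 'I_n, ncb f (1 + m) i.
  apply: (@tree_nc n f 1 m _ r) => // i Hi.
  have E2 : 2 ^ m.+1 = 2 * 2 ^ m by rewrite expnS.
  have H1 : 2 * i + 1 < n by lia.
  have H2 : 2 * i + 2 < n by lia.
  exists (Ordinal H1), (Ordinal H2); do 2 (split; first by []).
  have [C1 D1] := @Gsc_child1 n i (Ordinal H1) erefl.
  have [C2 D2] := @Gsc_child2 n i (Ordinal H2) erefl.
  by rewrite /child_null /child_pos Hf.
have := class_ge hnil Hi.
rewrite -/m; lia.
Qed.
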